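(* Let $G=(V,E)$ be a graph with nonnegative edge lengths, root $r$, and integer demands $d_v>0$ on a set $\mathcal{D}$ of demand nodes, with total demand $D$. Fix $\epsilon>0$, $\alpha>1$, $\beta\ge\frac{\alpha+1}{\alpha-1}$, $\gamma>1$, $\delta>1$. Let $L\subseteq\{0,\dots,K\}$ and the cores $C_i$ ($i\in L$) be produced by Procedure 1 below, and let $T$ be produced by Procedure 2 below. Then $T$ is a tree and spans all demand nodes. Procedure 1: let $K=\lceil\log_{1+\epsilon}D\rceil$, $M_i=(1+\epsilon)^i$, $A_i(x)=\min\{x,M_i\}$; (1) for each $i=0,\dots,K$ let $T_i$ be a routing tree returned by a deterministic $\lambda$-approximation algorithm for SSRoB with cost function $A_i$; (2) for $i=1,\dots,K$ increasing, if $A_i(T_{i-1})<A_i(T_i)$ set $T_i\leftarrow T_{i-1}$; (3) for $i=K-1,\dots,0$ decreasing, if $A_i(T_{i+1})<A_i(T_i)$ set $T_i\leftarrow T_{i+1}$; (4) compute $C_i,B_i,R_i$ for each resulting $T_i$; (5) $L_B=\emptyset$, $B=\infty$; for $i=0,\dots,K$ increasing, if $B_i<B/\gamma$ add $i$ to $L_B$ and set $B\leftarrow B_i$; (6) $L=\emptyset$, $R=\infty$; for $i\in L_B$ decreasing, if $R_i<R/\delta$ add $i$ to $L$ and set $R\leftarrow R_i$. Procedure 2: set $T=\{r\}$; for each $i\in L$ in decreasing order, let $T'$ be an $(\alpha,\beta)$-LAST of the graph $(G/T)[C_i]$ rooted at the vertex obtained by contracting $T$, and set $T\leftarrow T\cup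 T'$.
   Context: A routing tree is a tree in $G$ containing $r$ and all demand nodes; each demand node $v$ sends $d_v$ units of flow to $r$ along its unique tree path, and $x_e$ is the total flow on edge $e$; $f(T)=\sum_{e\in T}l_ef(x_e)$. SSRoB with parameter $M$: find a routing tree minimizing $A(T)$ for $A(x)=\min\{x,M\}$; a $\lambda$-approximation returns a tree of cost at most $\lambda$ times optimal. For a routing tree $T_i$: rent cost $R_i=\sum_{e\in T_i,\,x_e<M_i} l_e A_i(x_e)$, normalized buy cost $B_i=\sum_{e\in T_i,\,x_e\ge M_i} l_e$, and the core $C_i$ consists of $r$ together with all vertices incident to edges $e\in T_i$ with $x_e\ge M_i$. $G/T$ denotes $G$ with the vertices of $T$ contracted to a single vertex, and $(G/T)[C_i]$ is its induced subgraph on $C_i$ (together with the contracted vertex); edges of $T'$ are identified with the corresponding edges of $G$. For $\alpha,\beta\ge1$, an $(\alpha,\beta)$-light approximate shortest-path tree ($(\alpha,\beta)$-LAST) of a graph $H$ with root $\rho$ is a spanning tree of $H$ in which every vertex's tree distance to $\rho$ is at most $\alpha$ times its shortest-path distance to $\rho$ in $H$, and whose total edge length is at most $\beta$ times the weight of a minimum spanning tree of $H$; such trees exist (and are efficiently computable) whenever $\alpha>1$ and $\beta\ge\frac{\alpha+1}{\alpha-1}$. *)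

(* Defs.v *)
From HB Require Import structures.
From mathcomp Require Import all_boot all_order all_algebra.
From mathcomp Require Import all_classical all_reals all_analysis.
Set Implicit Arguments. Unset Strict Implicit. Unset Printing Implicit Defensive.
Import Order.TTheory GRing.Theory Num.Theory.
Local Open Scope ring_scope.

(* Finite (multi)graphs: vertex type V, edge type E, each edge e has   *)
(* endpoints src e, tgt e (undirected).  Subgraphs are edge sets.       *)
Section GraphDefs.
Variables (V E : finType) (src tgt : E -> V).

Definition adj (F : {set E}) : rel V := fun x y =>
  [exists e in F, ((src e == x) && (tgt e == y)) || ((src e == y) && (tgt e == x))].

Definition conn (F : {set E}) (x y : V) : bool := connect (adj F) x y.

Definition verts (F : {set E}) (r : V) : {set V} :=
  r |: [set v | [exists e in F, (src e == v) || (tgt e == v)]].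

(* (verts F r, F) is a tree: connected, and acyclic (every edge is a bridge;
   in particular no loops) *)
Definition is_tree (F : {set E}) (r : V) : Prop :=
  (forall v, v \in verts F r -> conn F v r) /\
  (forall e, e \in F -> ~~ conn (F :\ e) (src e) (tgt e)).

Fixpoint is_walk (F : {set E}) (x : V) (p : seq E) (y : V) : bool :=
  match p with
  | [::] => x == y
  | e :: p' => (e \in F) &&
      (((src e == x) && is_walk F (tgt e) p' y) ||
       ((tgt e == x) && is_walk F (src e) p' y))
  end.

Variables (R : realType) (l : E -> R).

Definition walk_len (p : seq E) : R := \sum_(e <- p) l e.
Definition set_len (F : {set E}) : R := \sum_(e in F) l e.

(* length of the unique path from v to rho in the tree S:
   edge e lies on that path iff removing e separates v from rho *)
Definition tree_dist (S : {set E}) (rho v : V) : R :=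
  \sum_(e in S | ~~ conn (S :\ e) v rho) l e.

Definition spanning_tree (W : {set V}) (F : {set E}) (rho : V) (S : {set E}) : Prop :=
  S \subset F /\ is_tree S rho /\ verts S rho = W.

(* (alpha,beta)-LAST of H = (W, F) rooted at rho: every vertex's tree
   distance is at most alpha times its shortest-path distance in H
   (i.e. at most alpha times the length of every walk in H from rho to it),
   and total length at most beta times the weight of an MST of H
   (i.e. at most beta times the weight of every spanning tree of H). *)
Definition is_LAST (W : {set V}) (F : {set E}) (rho : V) (alpha beta : R)
    (S : {set E}) : Prop :=
  [/\ spanning_tree W F rho S,
      (forall v p, v \in W -> is_walk F rho p v ->
          tree_dist S rho v <= alpha * walk_len p) &
      (forall S', spanning_tree W F rho S' -> set_len S <= beta * set_len S')].

End GraphDefs.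

Section Routing.
Variables (V E : finType) (src tgt : E -> V) (R : realType) (l : E -> R)
  (r : V) (Dset : {set V}) (d : V -> nat).

Definition routing_tree (T : {set E}) : Prop :=
  is_tree src tgt T r /\ Dset \subset verts src tgt T r.

(* total flow on e: demands whose tree path to r uses e *)
Definition flow (T : {set E}) (e : E) : nat :=
  (\sum_(v in Dset | ~~ conn src tgt (T :\ e) v r) d v)%N.

Definition Acost (M x : R) : R := Num.min x M.

Definition cost (M : R) (T : {set E}) : R :=
  \sum_(e in T) l e * Acost M (flow T e)%:R.

Definition totD : nat := (\sum_(v in Dset) d v)%N.

Variables (eps gamma delta alpha beta : R).

Definition Kof : nat := `|Num.ceil (ln (totD%:R : R) / ln (1 + eps))|%N.

Definition Mi (i : nat) : R := (1 + eps) ^+ i.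

Fixpoint step2 (T0 : nat -> {set E}) (i : nat) : {set E} :=
  match i with
  | 0 => T0 0%N
  | j.+1 => if cost (Mi j.+1) (step2 T0 j) < cost (Mi j.+1) (T0 j.+1)
            then step2 T0 j else T0 j.+1
  end.

(* step (3): i = K-1..0 decreasing; step3aux K T2 n is the tree of index K - n *)
Fixpoint step3aux (K : nat) (T2 : nat -> {set E}) (n : nat) : {set E} :=
  match n with
  | 0 => T2 K
  | n'.+1 => let i := (K - n)%N in
      if cost (Mi i) (step3aux K T2 n') < cost (Mi i) (T2 i)
      then step3aux K T2 n' else T2 i
  end.

Definition Tfin (T0 : nat -> {set E}) (i : nat) : {set E} :=
  step3aux Kof (step2 T0) (Kof - i)%N.

Definition core (T : {set E}) (M : R) : {set V} :=
  r |: [set v | [exists e in T,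
          (M <= (flow T e)%:R) && ((src e == v) || (tgt e == v))]].
Definition Bcost (T : {set E}) (M : R) : R :=
  \sum_(e in T | M <= (flow T e)%:R) l e.
Definition Rcost (T : {set E}) (M : R) : R :=
  \sum_(e in T | (flow T e)%:R < M) l e * Acost M (flow T e)%:R.

Definition Ci (T0 : nat -> {set E}) (i : nat) : {set V} := core (Tfin T0 i) (Mi i).

(* step (5): None encodes B = infinity *)
Definition LB (T0 : nat -> {set E}) : seq nat :=
  (foldl (fun (st : seq nat * option R) i =>
      let Bi := Bcost (Tfin T0 i) (Mi i) in
      if (if st.2 is Some B then Bi < B / gamma else true)
      then (rcons st.1 i, Some Bi) else st)
    ([::], None) (iota 0 Kof.+1)).1.

(* step (6): iterate over L_B in decreasing order; None encodes R = infinity *)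
Definition Lset (T0 : nat -> {set E}) : seq nat :=
  (foldl (fun (st : seq nat * option R) i =>
      let Ri := Rcost (Tfin T0 i) (Mi i) in
      if (if st.2 is Some Rb then Ri < Rb / delta else true)
      then (rcons st.1 i, Some Ri) else st)
    ([::], None) (rev (LB T0))).1.

(* Procedure 2.  The contraction G/T is encoded by the vertex map pi that
   sends every vertex of T to r (the contracted vertex) and fixes the others.
   (G/T)[C] has vertex set pi(C u V(T)), edges all edges of G with both
   endpoints in C u V(T), with endpoints pi o src, pi o tgt. *)
Definition contr (VT : {set V}) (v : V) : V := if v \in VT then r else v.

Definition HW (VT C : {set V}) : {set V} := [set contr VT v | v in C :|: VT].
Definition HF (VT C : {set V}) : {set E} :=
  [set e | (src e \in C :|: VT) && (tgt e \in C :|: VT)].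

(* proc2 C Tcur Ls Tres : starting from the current tree Tcur and
   processing the indices Ls in order, some run of the procedure
   (with any choice of LASTs) ends with Tres *)
Fixpoint proc2 (C : nat -> {set V}) (Tcur : {set E}) (Ls : seq nat)
    (Tres : {set E}) : Prop :=
  match Ls with
  | [::] => Tres = Tcur
  | i :: Ls' =>
      let VT := verts src tgt Tcur r in
      exists T' : {set E},
        is_LAST (fun e => contr VT (src e)) (fun e => contr VT (tgt e)) l
          (HW VT (C i)) (HF VT (C i)) r alpha beta T' /\
        proc2 C (Tcur :|: T') Ls' Tres
  end.

(* Procedure 2 started from T = {r} (no edges), L in decreasing order *)
Definition proc2_result (T0 : nat -> {set E}) (T : {set E}) : Prop :=
  proc2 (Ci T0) (finset.set0 : {set E}) (sort (fun a b : nat => (b <= a)%N) (Lset T0)) T.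

End Routing.

(* Main.v *)
Require Import Defs.
From HB Require Import structures.
From mathcomp Require Import all_boot all_order all_algebra.
From mathcomp Require Import all_classical all_reals all_analysis.
From mathcomp Require Import lra zify.
Import Order.TTheory GRing.Theory Num.Theory.
Set Implicit Arguments. Unset Strict Implicit.

Lemma adj_symm (V E : finType) (s t : E -> V) (F : {set E}) :
  symmetric (adj s t F).
Proof.
move=> x y; rewrite /adj; apply/existsP/existsP => -[e He]; exists e;
  move: He; case/andP => -> /=; rewrite orbC; exact: id.
Qed.

Lemma conn_sym (V E : finType) (s t : E -> V) (F : {set E}) x y :
  conn s t F x y = conn s t F y x.
Proof.
rewrite /conn; have H := sym_connect_sym (adj_symm s t F).
by apply: H.
Qed.

Lemma conn_trans (V E : finType) (s t : E -> V) (F : {set E}) x y z :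
  conn s t F x y -> conn s t F y z -> conn s t F x z.
Proof. exact: connect_trans. Qed.

Lemma adj_mono (V E : finType) (s t : E -> V) (F F' : {set E}) x y :
  F \subset F' -> adj s t F x y -> adj s t F' x y.
Proof.
move=> /fintype.subsetP sub /existsP [e /andP [eF H]]; apply/existsP; exists e.
by rewrite (sub _ eF).
Qed.

Lemma conn_mono (V E : finType) (s t : E -> V) (F F' : {set E}) x y :
  F \subset F' -> conn s t F x y -> conn s t F' x y.
Proof.
move=> sub; apply: connect_sub => a b H; apply: connect1; exact: adj_mono H.
Qed.

Lemma edge_adj (V E : finType) (s t : E -> V) (F : {set E}) e :
  e \in F -> adj s t F (s e) (t e).
Proof. by move=> eF; apply/existsP; exists e; rewrite eF !eqxx. Qed.

Lemma edge_conn (V E : finType) (s t : E -> V) (F : {set E}) e :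
  e \in F -> conn s t F (s e) (t e).
Proof. by move=> eF; apply: connect1; apply: edge_adj. Qed.

Lemma adj_inv (V E : finType) (s t : E -> V) (F : {set E}) x y :
  adj s t F x y -> exists2 e, e \in F &
     (s e = x /\ t e = y) \/ (s e = y /\ t e = x).
Proof.
case/existsP => e /andP [eF H]; exists e => //.
by case/orP: H => /andP [/eqP h1 /eqP h2]; [left|right]; split.
Qed.

Lemma conn_split (V E : finType) (s t : E -> V) (F : {set E}) e x y :
  e \in F -> conn s t F x y ->
  conn s t (F :\ e) x y \/
  (conn s t (F :\ e) x (s e) /\ conn s t (F :\ e) (t e) y) \/
  (conn s t (F :\ e) x (t e) /\ conn s t (F :\ e) (s e) y).
Proof.
move=> eF /connectP [p Hp ->]; set G := F :\ e.
elim: p x Hp => [|z p IH] x /=; first by left; exact: connect0.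
case/andP => Hxz Hp; have IHz := IH _ Hp; set w := last z p in IHz *.
have [f fF Hf] := adj_inv Hxz.
have [fe|fne] := eqVneq f e.
- subst f; case: Hf => -[h1 h2]; subst x z.
  + case: IHz => [H|[[H1 H2]|[H1 H2]]].
    * by right; left; split => //; exact: connect0.
    * by left; apply: conn_trans H2; rewrite conn_sym.
    * by left.
  + case: IHz => [H|[[H1 H2]|[H1 H2]]].
    * by right; right; split => //; exact: connect0.
    * by left.
    * by left; rewrite conn_sym in H1; exact: conn_trans H1 H2.
- have Cxz : conn s t G x z.
    apply: connect1; apply/existsP; exists f; rewrite !inE fne fF /=.
    by case: Hf => -[-> ->]; rewrite !eqxx ?orbT.
  case: IHz => [H|[[H1 H2]|[H1 H2]]].
  + left; exact: conn_trans Cxz H.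
  + right; left; split => //; exact: conn_trans Cxz H1.
  + right; right; split => //; exact: conn_trans Cxz H1.
Qed.


Lemma path_avoid (V E : finType) (s t : E -> V) (F : {set E}) e v x q :
  e \in F -> (s e == v) || (t e == v) -> path (adj s t F) x q ->
  v \notin x :: q -> path (adj s t (F :\ e)) x q.
Proof.
move=> eF ev; elim: q x => [|z q IH] x //=.
case/andP => Hxz Hp; rewrite !inE negb_or => /andP [vx]; rewrite negb_or => /andP [vz vq].
rewrite IH ?inE ?negb_or ?vz ?vq // andbT.
have [f fF Hf] := adj_inv Hxz.
apply/existsP; exists f; rewrite !inE fF andbT.
have -> : f != e.
  apply/eqP => fe; subst f.
  by case: Hf => -[h1 h2]; move: ev; rewrite h1 h2 => /orP [] /eqP vv;
     move: vx vz; rewrite vv eqxx.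
by case: Hf => -[-> ->]; rewrite !eqxx ?orbT.
Qed.

Lemma edge_find (V E : finType) (s t : E -> V) (T : {set E}) r v :
  (forall e, e \in T -> ~~ conn s t (T :\ e) (s e) (t e)) ->
  conn s t T v r -> v != r ->
  exists2 e, e \in T & ((s e == v) || (t e == v)) && ~~ conn s t (T :\ e) v r.
Proof.
move=> acyc /connectP [p Hp Hr]; move: Hr.
case: (shortenP Hp) => p' Hp' Up' _ Hr vr.
case: p' Hp' Up' Hr => [|x1 q] /=; first by move=> _ _ rv; move: vr; rewrite rv => /eqP.
case/andP => Hvx Hq /andP [vn _] Hr.
have [e eT He] := adj_inv Hvx.
exists e => //.
have ev : (s e == v) || (t e == v) by case: He => -[-> ->]; rewrite eqxx ?orbT.
apply/andP; split => //; apply/negP => C.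
have C1 : conn s t (T :\ e) x1 r.
  apply/connectP; exists q => //; exact: path_avoid eT ev Hq vn.
have C2 : conn s t (T :\ e) v x1 by apply: conn_trans C _; rewrite conn_sym.
have := acyc e eT; case: He => -[-> ->]; first by rewrite C2.
by rewrite conn_sym C2.
Qed.


Lemma r_verts (V E : finType) (s t : E -> V) (F : {set E}) r :
  r \in verts s t F r.
Proof. by rewrite /verts setU11. Qed.

Lemma verts_src (V E : finType) (s t : E -> V) (F : {set E}) r e :
  e \in F -> s e \in verts s t F r.
Proof.
by move=> eF; rewrite /verts !inE; apply/orP; right; apply/existsP; exists e; rewrite eF eqxx.
Qed.

Lemma verts_tgt (V E : finType) (s t : E -> V) (F : {set E}) r e :
  e \in F -> t e \in verts s t F r.
Proof.
by move=> eF; rewrite /verts !inE; apply/orP; right; apply/existsP; exists e; rewrite eF eqxx orbT.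
Qed.

Lemma contr_class (V E : finType) (s t : E -> V) (T : {set E}) r a b :
  (forall x, x \in verts s t T r -> conn s t T x r) ->
  contr r (verts s t T r) a = contr r (verts s t T r) b -> conn s t T a b.
Proof.
move=> hT; rewrite /contr.
have rV := r_verts s t T r.
case: ifP => Ha; case: ifP => Hb.
- move=> _; apply: conn_trans (hT _ Ha) _; rewrite conn_sym; exact: hT.
- by move=> rb; rewrite -rb rV in Hb.
- by move=> ar; rewrite ar rV in Ha.
- move=> ->; exact: connect0.
Qed.

Lemma proj_fwd (V E : finType) (s t : E -> V) (T S : {set E}) r x y :
  let pi := contr r (verts s t T r) in
  conn s t (T :|: S) x y ->
  conn (fun e => pi (s e)) (fun e => pi (t e)) S (pi x) (pi y).
Proof.
move=> pi /connectP [p Hp ->].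
elim: p x Hp => [|z p IH] x /=; first by move=> _; exact: connect0.
case/andP => Hxz Hp; have IHz := IH _ Hp.
have [f fF Hf] := adj_inv Hxz.
move: fF; rewrite inE => /orP [fT|fS].
- have Hpi : pi x = pi z.
    rewrite /pi /contr.
    by case: Hf => -[<- <-]; rewrite (verts_src _ _ _ fT) (verts_tgt _ _ _ fT).
  by rewrite Hpi.
- apply: conn_trans IHz; apply: connect1; apply/existsP; exists f; rewrite fS /=.
  by case: Hf => -[<- <-]; rewrite !eqxx ?orbT.
Qed.

Lemma proj_bwd (V E : finType) (s t : E -> V) (T S : {set E}) r u w :
  let pi := contr r (verts s t T r) in
  (forall x, x \in verts s t T r -> conn s t T x r) ->
  conn (fun e => pi (s e)) (fun e => pi (t e)) S u w ->
  forall x y, pi x = u -> pi y = w -> conn s t (T :|: S) x y.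
Proof.
move=> pi hT /connectP [p Hp ->].
have sub : T \subset T :|: S by apply: finset.subsetUl.
elim: p u Hp => [|z p IH] u /= => [_|].
  move=> x y Hx Hy; apply: conn_mono sub _; apply: contr_class hT _; by rewrite -/pi Hx Hy.
case/andP => Huz Hp x y Hx Hy.
have [f fS Hf] := adj_inv Huz.
have fTS : f \in T :|: S by rewrite inE fS orbT.
case: Hf => -[h1 h2].
- apply: conn_trans (_ : conn s t (T :|: S) x (s f)) _.
    apply: conn_mono sub _; apply: contr_class hT _; by rewrite -/pi Hx -h1.
  apply: conn_trans (edge_conn s t fTS) _; exact: IH Hp _ _ h2 Hy.
- apply: conn_trans (_ : conn s t (T :|: S) x (t f)) _.
    apply: conn_mono sub _; apply: contr_class hT _; by rewrite -/pi Hx -h2.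
  have := edge_conn s t fTS; rewrite conn_sym => H.
  apply: conn_trans H _; exact: IH Hp _ _ h1 Hy.
Qed.


Lemma tree_step (V E : finType) (s t : E -> V) (T T' : {set E}) r :
  is_tree s t T r ->
  is_tree (fun e => contr r (verts s t T r) (s e))
          (fun e => contr r (verts s t T r) (t e)) T' r ->
  is_tree s t (T :|: T') r.
Proof.
set pi := contr r (verts s t T r).
move=> [hT aT] [hT' aT'].
have pir : pi r = r by rewrite /pi /contr r_verts.
have notT : forall f, f \in T' -> f \notin T.
  move=> f fT'; apply/negP => fT; have := aT' f fT'.
  rewrite /pi /contr (verts_src _ _ _ fT) (verts_tgt _ _ _ fT).
  by rewrite /conn connect0.
split.
- move=> v; rewrite /verts !inE => /orP [/eqP ->|]; first exact: connect0.
  case/existsP => e /andP [eF ev]; move: eF; rewrite inE => /orP [eT|eT'].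
  + apply: conn_mono (finset.subsetUl _ _) _; apply: hT.
    by case/orP: ev => /eqP <-; [apply: verts_src|apply: verts_tgt].
  + apply: (proj_bwd hT (hT' (pi v) _)) => //.
    rewrite /verts !inE; apply/orP; right; apply/existsP; exists e.
    by rewrite eT' /=; case/orP: ev => /eqP ->; rewrite eqxx ?orbT.
- move=> e; rewrite inE => /orP [eT|eT'].
  + have eT' : e \notin T' by apply/negP => /notT; rewrite eT.
    suff key : forall n (S : {set E}), (#|S| <= n)%N -> S \subset T' ->
        ~~ conn s t ((T :\ e) :|: S) (s e) (t e).
      apply/negP => C; move/negP: (key _ T' (leqnn _) (subxx _)); apply.
      apply: conn_mono C; apply/fintype.subsetP => x; rewrite !inE.
      by case/andP => -> /orP [->|->]; rewrite ?orbT.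
    elim => [|n IH] S.
      rewrite leqn0 finset.cards_eq0 => /eqP -> _; rewrite finset.setU0; exact: aT.
    move=> cS sS; apply/negP => C.
    have [S0|[f fS]] := set_0Vmem S.
      by move: C; rewrite S0 finset.setU0; apply/negP; exact: aT.
    have fT' : f \in T' by apply: (fintype.subsetP sS).
    have fnT := notT f fT'.
    have fF : f \in (T :\ e) :|: S by rewrite inE fS orbT.
    have sub1 : ((T :\ e) :|: S) :\ f \subset (T :\ e) :|: (S :\ f).
      apply/fintype.subsetP => x; rewrite !inE.
      by case/andP => -> /orP [->|->]; rewrite ?orbT.
    have sub2 : ((T :\ e) :|: S) :\ f \subset T :|: (S :\ f).
      apply/fintype.subsetP => x; rewrite !inE.
      by case/andP => -> /orP [/andP [_ ->]|->]; rewrite ?orbT.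
    have efT : e \in T :|: (S :\ f).
      by rewrite !inE eT; case: eqP => // ef; subst f; rewrite eT in fnT.
    have contra : conn s t (T :|: (S :\ f)) (s f) (t f) -> False.
      move=> Cf; have := proj_fwd r Cf; rewrite -/pi => Cf'.
      have := aT' f fT'; rewrite (conn_mono _ Cf') //.
      by apply: finset.setSD.
    case: (conn_split fF C) => [C1|[[C1 C2]|[C1 C2]]].
    + have h1 : (#|S :\ f| <= n)%N.
        by rewrite (cardsD1 f S) fS add1n ltnS in cS.
      have h2 : S :\ f \subset T'.
        by apply: fintype.subset_trans sS; apply: finset.subsetDl.
      by move/negP: (IH _ h1 h2); apply; exact: conn_mono sub1 C1.
    + apply: contra.
      have D1 := conn_mono sub2 C1; have D2 := conn_mono sub2 C2.
      rewrite conn_sym in D1.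
      apply: conn_trans D1 _; apply: conn_trans (edge_conn s t efT) _.
      by rewrite conn_sym.
    + apply: contra.
      have D1 := conn_mono sub2 C1; have D2 := conn_mono sub2 C2.
      apply: conn_trans D2 _; apply: conn_trans _ D1.
      rewrite conn_sym; have HH := edge_conn s t efT; exact: HH.
  + have enT := notT e eT'.
    apply/negP => C.
    have sub : (T :|: T') :\ e \subset T :|: (T' :\ e).
      apply/fintype.subsetP => x; rewrite !inE.
      by case/andP => -> /orP [->|->]; rewrite ?orbT.
    have := proj_fwd r (conn_mono sub C); rewrite -/pi => C'.
    by have := aT' e eT'; rewrite C'.
Qed.


Lemma verts_mono (V E : finType) (s t : E -> V) (F F' : {set E}) r :
  F \subset F' -> verts s t F r \subset verts s t F' r.
Proof.
move=> /fintype.subsetP sub; apply/fintype.subsetP => v; rewrite /verts !inE.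
case/orP => [->//|/existsP [e /andP [eF H]]]; apply/orP; right.
by apply/existsP; exists e; rewrite (sub _ eF).
Qed.

Lemma proc2_inv (V E : finType) (s t : E -> V) (R : realType) (l : E -> R) r
  (alpha beta : R) (C : nat -> {set V}) (Ls : seq nat) :
  forall Tcur Tres, is_tree s t Tcur r -> proc2 s t l r alpha beta C Tcur Ls Tres ->
  [/\ is_tree s t Tres r, verts s t Tcur r \subset verts s t Tres r &
      forall i, i \in Ls -> C i \subset verts s t Tres r].
Proof.
elim: Ls => [|i Ls IH] Tcur Tres hT /=.
  by move=> ->; split => //; apply: subxx.
case=> T' [[[_ [hT' vT'] _ _]] rest].
have hU := tree_step hT hT'.
have [hR sR cR] := IH _ _ hU rest.
have sU : verts s t Tcur r \subset verts s t (Tcur :|: T') r.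
  by apply: verts_mono; apply: finset.subsetUl.
split => //; first exact: fintype.subset_trans sU sR.
move=> j; rewrite inE => /orP [/eqP ->|]; last exact: cR.
apply: fintype.subset_trans sR; apply/fintype.subsetP => c cC.
set VT := verts s t Tcur r in hT' vT' sU *.
have [cV|cnV] := boolP (c \in VT); first exact: (fintype.subsetP sU).
have rV : r \in VT by apply: r_verts.
have pc : contr r VT c = c by rewrite /contr (negbTE cnV).
have : c \in HW r VT (C i).
  rewrite /HW -{1}pc; apply: imset_f; by rewrite inE cC.
rewrite -vT' /verts !inE => /orP [/eqP cr|]; first by rewrite cr rV in cnV.
case/existsP => e /andP [eT' /orP [] /eqP Hc].
- have nV : s e \notin VT.
    apply/negP => sV; move: Hc; rewrite /contr sV => cr.
    by rewrite -cr rV in cnV.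
  move: Hc; rewrite /contr (negbTE nV) => <-.
  by apply/orP; right; apply/existsP; exists e; rewrite inE eT' orbT eqxx.
- have nV : t e \notin VT.
    apply/negP => sV; move: Hc; rewrite /contr sV => cr.
    by rewrite -cr rV in cnV.
  move: Hc; rewrite /contr (negbTE nV) => <-.
  by apply/orP; right; apply/existsP; exists e; rewrite inE eT' orbT eqxx orbT.
Qed.

Local Open Scope ring_scope.

Lemma cost_ge_B (V E : finType) (s t : E -> V) (R : realType) (l : E -> R) r Dset d
  (M : R) (T : {set E}) :
  (forall e, 0 <= l e) -> 0 <= M ->
  M * Bcost s t l r Dset d T M <= cost s t l r Dset d M T.
Proof.
move=> l0 M0; rewrite /cost /Bcost.
rewrite [X in _ <= X](bigID (fun e => M <= (flow s t r Dset d T e)%:R)) /=.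
rewrite mulr_sumr; apply: le_trans (_ : _ <= \sum_(i in T | M <= (flow s t r Dset d T i)%:R)
   l i * Acost M (flow s t r Dset d T i)%:R) _.
  by apply: ler_sum => e /andP [_ H]; rewrite /Acost min_r // mulrC.
rewrite lerDl; apply: sumr_ge0 => e _; apply: mulr_ge0 => //.
by rewrite /Acost le_min ler0n.
Qed.

Lemma cost_le_BR (V E : finType) (s t : E -> V) (R : realType) (l : E -> R) r Dset d
  (M M' : R) (T : {set E}) :
  (forall e, 0 <= l e) -> M <= M' ->
  cost s t l r Dset d M T <=
  M * Bcost s t l r Dset d T M' + Rcost s t l r Dset d T M'.
Proof.
move=> l0 MM; rewrite /cost /Bcost /Rcost.
rewrite (bigID (fun e => M' <= (flow s t r Dset d T e)%:R)) /=.
rewrite mulr_sumr; apply: lerD.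
  apply: ler_sum => e /andP [_ H]; rewrite [M * _]mulrC; apply: ler_wpM2l => //.
  by rewrite /Acost ge_min lexx orbT.
rewrite [X in _ <= X](eq_bigl (fun e => (e \in T) && ~~ (M' <= (flow s t r Dset d T e)%:R))); last first.
  by move=> e; rewrite ltNge.
apply: ler_sum => e _; apply: ler_wpM2l => //.
rewrite /Acost le_min !ge_min lexx /=.
by rewrite MM orbT.
Qed.


Definition fstep (R : realType) (B : nat -> R) (g : R) :=
  fun (st : seq nat * option R) (i : nat) =>
    if (if st.2 is Some b then B i < b / g else true)
    then (rcons st.1 i, Some (B i)) else st.

Lemma LB_gen (R : realType) (B : nat -> R) (g : R) (K : nat) :
  1 < g -> (forall i, 0 <= B i) ->
  exists s', (foldl (fstep B g) ([::], None) (iota 0 K.+1)).1 = 0%N :: s' /\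
    forall j, j \in s' -> (0 < j <= K)%N /\ B j < B j.-1.
Proof.
move=> g1 B0.
have g0 : 0 < g by apply: lt_trans g1.
suff inv : forall n, (n <= K)%N -> exists s' b,
   foldl (fstep B g) ([:: 0%N], Some (B 0%N)) (iota 1 n) = (0%N :: s', Some b) /\
   b / g <= B n /\ forall j, j \in s' -> (0 < j <= n)%N /\ B j < B j.-1.
  have [s' [b [H [_ H2]]]] := inv K (leqnn K).
  exists s'; split; first by rewrite /= /fstep /= H.
  by move=> j /H2 [/andP [j0 jn] Bj]; rewrite j0 jn.
elim => [|n IH] nK.
  exists [::], (B 0%N); split => //; split => //.
  rewrite ler_pdivrMr //; have := B0 0%N; nra.
have [s' [b [H [Hb Hs]]]] := IH (ltnW nK).
have -> : iota 1 n.+1 = iota 1 n ++ [:: n.+1] by rewrite -[n.+1]addn1 iotaD add1n addn1.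
rewrite foldl_cat H /= /fstep /=.
case: ifP => Hlt.
- exists (rcons s' n.+1), (B n.+1); split => //; split.
    rewrite ler_pdivrMr //; have := B0 n.+1; nra.
  move=> j; rewrite mem_rcons inE => /orP [/eqP ->|/Hs [/andP [j0 jn] Bj]].
    by split; [rewrite /= leqnn | exact: lt_le_trans Hlt Hb].
  by rewrite j0 (leq_trans jn) //.
- exists s', b; split => //; split; first by rewrite leNgt Hlt.
  by move=> j /Hs [/andP [j0 jn] Bj]; rewrite j0 (leq_trans jn) //.
Qed.

Lemma Lset_gen (R : realType) (Rf : nat -> R) (dl : R) (s' : seq nat) :
  0 < dl -> Rf 0%N = 0 -> (forall j, j \in s' -> 0 < Rf j) ->
  0%N \in (foldl (fstep Rf dl) ([::], None) (rev (0%N :: s'))).1.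
Proof.
move=> d0 R0 Hs; rewrite rev_cons foldl_rcons.
have key : forall u (st : seq nat * option R), (forall j, j \in u -> 0 < Rf j) ->
    (st.2 = None \/ exists b, st.2 = Some b /\ 0 < b) ->
    (foldl (fstep Rf dl) st u).2 = None \/
    exists b, (foldl (fstep Rf dl) st u).2 = Some b /\ 0 < b.
  elim => [|j u IH] st Hu Hst //=.
  apply: IH; first by move=> k ku; apply: Hu; rewrite inE ku orbT.
  rewrite /fstep; case: ifP => _ //=.
  by right; exists (Rf j); split => //; apply: Hu; rewrite mem_head.
have H : forall j, j \in rev s' -> 0 < Rf j by move=> j; rewrite mem_rev; apply: Hs.
have := key (rev s') ([::], None) H (or_introl erefl).
case: (foldl (fstep Rf dl) ([::], None) (rev s')) => s1 o /= [->|[b [-> b0]]];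
  rewrite /fstep /=; first by rewrite mem_rcons mem_head.
by rewrite R0 divr_gt0 // mem_rcons mem_head.
Qed.


Lemma tfin_chain (V E : finType) (s t : E -> V) (R : realType) (l : E -> R) r Dset d
  (eps : R) T0 i :
  (i < Kof Dset d eps)%N ->
  cost s t l r Dset d (Mi eps i) (Tfin s t l r Dset d eps T0 i) <=
  cost s t l r Dset d (Mi eps i) (Tfin s t l r Dset d eps T0 i.+1).
Proof.
rewrite /Tfin; set K := Kof Dset d eps => iK.
have -> : (K - i = (K - i.+1).+1)%N by lia.
rewrite /=.
have -> : (K - (K - i.+1).+1 = i)%N by lia.
case: ifP => [/ltW //|H]; by rewrite leNgt H.
Qed.

Lemma step2_prop (V E : finType) (s t : E -> V) (R : realType) (l : E -> R) r Dset d
  (eps : R) T0 (P : {set E} -> Prop) K :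
  (forall i, (i <= K)%N -> P (T0 i)) ->
  forall i, (i <= K)%N -> P (step2 s t l r Dset d eps T0 i).
Proof.
move=> HP; elim => [|i IH] iK /=; first exact: HP.
by case: ifP => _; [apply: IH; apply: ltnW|apply: HP].
Qed.

Lemma step3_prop (V E : finType) (s t : E -> V) (R : realType) (l : E -> R) r Dset d
  (eps : R) T2 (P : {set E} -> Prop) K :
  (forall i, (i <= K)%N -> P (T2 i)) ->
  forall n, P (step3aux s t l r Dset d eps K T2 n).
Proof.
move=> HP; elim => [|n IH] /=; first exact: HP.
by case: ifP => _ //; apply: HP; apply: leq_subr.
Qed.

Lemma Mi0 (R : realType) (eps : R) : Mi eps 0 = 1.
Proof. by rewrite /Mi expr0. Qed.

Lemma Mi_gt0 (R : realType) (eps : R) i : 0 < eps -> 0 < Mi eps i.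
Proof. by move=> e0; rewrite /Mi exprn_gt0 // ltr_pwDr. Qed.

Lemma Mi_leS (R : realType) (eps : R) i : 0 < eps -> Mi eps i <= Mi eps i.+1.
Proof.
move=> e0; have := Mi_gt0 i e0; rewrite /Mi exprS => h.
set x := (1 + eps) ^+ i in h *; nra.
Qed.

Lemma tree0 (V E : finType) (s t : E -> V) r : is_tree s t (finset.set0 : {set E}) r.
Proof.
split; last by move=> e; rewrite inE.
move=> v; rewrite /verts !inE => /orP [/eqP ->|/existsP [e]]; first exact: connect0.
by rewrite inE.
Qed.

Lemma cover_core (V E : finType) (s t : E -> V) (R : realType) r (Dset : {set V}) d (T : {set E}) :
  is_tree s t T r -> Dset \subset verts s t T r -> (forall v, v \in Dset -> (0 < d v)%N) ->
  Dset \subset core s t r Dset d T (1 : R).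
Proof.
move=> [hT aT] sD d0; apply/fintype.subsetP => v vD.
rewrite /core !inE; have [->|vr] := eqVneq v r; first by [].
have vV : v \in verts s t T r by apply: (fintype.subsetP sD).
have [e eT /andP [ev Hn]] := edge_find aT (hT v vV) vr.
apply/orP; right; apply/existsP; exists e; rewrite eT ev andbT /=.
rewrite ler1n /flow (bigD1 v) /=; last by rewrite vD Hn.
by apply: leq_trans (d0 v vD) (leq_addr _ _).
Qed.

Unset Implicit Arguments. Set Strict Implicit.

Theorem lemma7 (R : realType) (V E : finType) (src tgt : E -> V) (l : E -> R)
  (r : V) (Dset : {set V}) (d : V -> nat)
  (eps alpha beta gamma delta lambda : R)
  (T0 : nat -> {set E}) (T : {set E}) :
  (forall e, 0 <= l e) ->
  (forall v, v \in Dset -> (0 < d v)%N) ->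
  0 < eps -> 1 < alpha -> (alpha + 1) / (alpha - 1) <= beta ->
  1 < gamma -> 1 < delta -> 1 <= lambda ->
  (* step (1): T0 i is the output of a deterministic lambda-approximation
     algorithm for SSRoB with cost function A_i *)
  (forall i, (i <= Kof Dset d eps)%N ->
     routing_tree src tgt r Dset (T0 i) /\
     (forall T', routing_tree src tgt r Dset T' ->
        cost src tgt l r Dset d (Mi eps i) (T0 i)
          <= lambda * cost src tgt l r Dset d (Mi eps i) T')) ->
  proc2_result src tgt l r Dset d eps gamma delta alpha beta T0 T ->
  is_tree src tgt T r /\ Dset \subset verts src tgt T r.
Proof.
move=> l0 d0 e0 _ _ g1 dl1 _ hT0 hP.
set K := Kof Dset d eps.
pose Tf := Tfin src tgt l r Dset d eps T0.
pose B := fun i => Bcost src tgt l r Dset d (Tf i) (Mi eps i).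
pose Rf := fun i => Rcost src tgt l r Dset d (Tf i) (Mi eps i).
have rtf0 : routing_tree src tgt r Dset (Tf 0%N).
  rewrite /Tf /Tfin; apply: (step3_prop src tgt l r Dset d eps (K := K)) => i iK.
  apply: (step2_prop src tgt l r Dset d eps (K := K)) => // j jK; exact: (hT0 j jK).1.
have B0 : forall i, 0 <= B i by move=> i; apply: sumr_ge0 => e _; apply: l0.
have [s' [HLB Hs']] := LB_gen K g1 B0.
have eLB : LB src tgt l r Dset d eps gamma T0 =
   (foldl (fstep B gamma) ([::], None) (iota 0 K.+1)).1 by [].
have Rpos : forall j, j \in s' -> 0 < Rf j.
  move=> j /Hs' [/andP [j0 jK] Bj].
  case: j j0 jK Bj => // i _ iK /= Bj.
  have M0 := Mi_gt0 i e0.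
  have MM := Mi_leS i e0.
  have h1 := cost_ge_B src tgt r Dset d (Tf i) l0 (ltW M0).
  have h2 := tfin_chain src tgt l r T0 iK.
  have h3 := cost_le_BR src tgt r Dset d (Tf i.+1) l0 MM.
  rewrite /Rf; rewrite /B in Bj.
  set c1 := cost _ _ _ _ _ _ _ (Tf i) in h1 h2.
  set c2 := cost _ _ _ _ _ _ _ (Tf i.+1) in h2 h3.
  set b1 := Bcost _ _ _ _ _ _ (Tf i) _ in h1 Bj.
  set b2 := Bcost _ _ _ _ _ _ (Tf i.+1) _ in h3 Bj.
  set r2 := Rcost _ _ _ _ _ _ _ _ in h3 *.
  set M := Mi eps i in M0 h1 h2 h3.
  nra.
have H0 : 0%N \in Lset src tgt l r Dset d eps gamma delta T0.
  rewrite /Lset eLB HLB; apply: (Lset_gen (Rf := Rf)).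
  - by apply: lt_trans dl1.
  - rewrite /Rf /Rcost big1 // => e /andP [_ H].
    move: H; rewrite Mi0 ltrn1 ltnS leqn0 => /eqP ->.
    by rewrite /Acost mulrC min_l // mul0r.
  - exact: Rpos.
have [tT _ cov] := proc2_inv (tree0 src tgt r) hP.
split => //.
apply: fintype.subset_trans (cov 0%N _); last by rewrite mem_sort.
rewrite /Ci -/Tf Mi0; exact: (cover_core _ rtf0.1 rtf0.2 d0).
Qed.
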